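(* Let $(E,P,\vartheta)$ be a bipolar metric space and let $F\colon E\cup P\to E\cup P$ with $F(E)\subseteq E$, $F(P)\subseteq P$ be a polynomial contraction, i.e. there exist $\pi\in(0,1)$, an integer $\sigma\geq1$ and functions $q_\upsilon\colon E\times P\to[0,\infty)$, $\upsilon=0,\dots,\sigma$, such that $$\sum_{\upsilon=0}^{\sigma} q_\upsilon(Fe,Ff)\,\vartheta^\upsilon(Fe,Ff)\leq \pi\sum_{\upsilon=0}^{\sigma} q_\upsilon(e,f)\,\vartheta^\upsilon(e,f)\quad\text{for all } e\in E,\ f\in P.$$ Assume (i) $q_0(e,f)=0$ for all $e\in E$, $f\in P$; (ii) for every $\upsilon\in\{1,\dots,\sigma\}$ there is $W_\upsilon>0$ with $q_\upsilon(e,f)\leq W_\upsilon$ for all $e\in E$, $f\in P$; (iii) there exist $\varrho\in\{1,\dots,\sigma\}$ and $Q_\varrho>0$ with $q_\varrho(e,f)\geq Q_\varrho$ for all $e\in E$, $f\in P$. Then $F$ is continuous.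
   Context: A bipolar metric space is a triple $(E,P,\vartheta)$ where $E,P$ are nonempty sets and $\vartheta\colon E\times P\to[0,\infty)$ satisfies: (1) for $e\in E$, $f\in P$, $\vartheta(e,f)=0$ iff $e=f$; (2) $\vartheta(e,f)=\vartheta(f,e)$ whenever $e,f\in E\cap P$; (3) $\vartheta(e,f)\leq\vartheta(e,z)+\vartheta(r,z)+\vartheta(r,f)$ for all $e,r\in E$, $z,f\in P$. A sequence $(x_n)$ in $E$ converges to $y\in P$ if $\vartheta(x_n,y)\to0$; a sequence $(y_n)$ in $P$ converges to $x\in E$ if $\vartheta(x,y_n)\to0$. $F$ is continuous if whenever a sequence $(u_n)$ (in $E$ or in $P$) converges to a point $v$, the sequence $(Fu_n)$ converges to $Fv$. $\vartheta^\upsilon$ denotes the $\upsilon$-th power of $\vartheta$, with $\vartheta^0\equiv1$. *)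

(* Defs.v *)
From Stdlib Require Import Reals.
Open Scope R_scope.

(* A bipolar metric space (E,P,d): E and P are subsets (predicates) of a common
   ambient type X (so that E ∩ P makes sense); d is only used on E × P. *)
Definition bipolar_metric_space {X : Type} (E P : X -> Prop) (d : X -> X -> R) : Prop :=
  (exists e, E e) /\ (exists f, P f) /\
  (forall e f, E e -> P f -> 0 <= d e f) /\
  (forall e f, E e -> P f -> (d e f = 0 <-> e = f)) /\
  (forall e f, E e -> P e -> E f -> P f -> d e f = d f e) /\
  (forall e r z f, E e -> E r -> P z -> P f ->
     d e f <= d e z + d r z + d r f).

Definition bp_conv_EP {X : Type} (d : X -> X -> R) (x : nat -> X) (y : X) : Prop :=
  Un_cv (fun n => d (x n) y) 0.

Definition bp_conv_PE {X : Type} (d : X -> X -> R) (y : nat -> X) (x : X) : Prop :=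
  Un_cv (fun n => d x (y n)) 0.

Definition bp_continuous {X : Type} (E P : X -> Prop) (d : X -> X -> R) (F : X -> X) : Prop :=
  (forall (u : nat -> X) (v : X), (forall n, E (u n)) -> P v ->
     bp_conv_EP d u v -> bp_conv_EP d (fun n => F (u n)) (F v)) /\
  (forall (u : nat -> X) (v : X), (forall n, P (u n)) -> E v ->
     bp_conv_PE d u v -> bp_conv_PE d (fun n => F (u n)) (F v)).

Definition poly_sum {X : Type} (q : nat -> X -> X -> R) (d : X -> X -> R)
  (sigma : nat) (e f : X) : R :=
  sum_f_R0 (fun u => q u e f * d e f ^ u) sigma.

(* Main.v *)
Require Import Defs.
From Stdlib Require Import Reals Lra Lia Arith.
Open Scope R_scope.


Lemma sum_nonneg (a : nat -> R) (n : nat) :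
  (forall i, (i <= n)%nat -> 0 <= a i) -> 0 <= sum_f_R0 a n.
Proof.
  induction n as [|n IH]; intros Hn; simpl.
  - apply Hn; lia.
  - assert (0 <= sum_f_R0 a n) by (apply IH; intros; apply Hn; lia).
    assert (0 <= a (S n)) by (apply Hn; lia). lra.
Qed.

Lemma sum_ge_term (a : nat -> R) (n k : nat) :
  (forall i, (i <= n)%nat -> 0 <= a i) -> (k <= n)%nat -> a k <= sum_f_R0 a n.
Proof.
  induction n as [|n IH]; intros Hn Hk.
  - replace k with 0%nat by lia. simpl. lra.
  - rewrite tech5. destruct (Nat.eq_dec k (S n)) as [->|Hne].
    + assert (0 <= sum_f_R0 a n) by (apply sum_nonneg; intros; apply Hn; lia).
      lra.
    + assert (a k <= sum_f_R0 a n) by (apply IH; [intros; apply Hn; lia | lia]).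
      assert (0 <= a (S n)) by (apply Hn; lia). lra.
Qed.

Lemma sum_upper (c : nat -> R) (x W : R) (n : nat) :
  0 <= x <= 1 -> 0 < W -> c 0%nat = 0 ->
  (forall i, (1 <= i <= n)%nat -> c i <= W) ->
  (forall i, (i <= n)%nat -> 0 <= c i) ->
  sum_f_R0 (fun u => c u * x ^ u) n <= INR n * W * x.
Proof.
  intros Hx HW H0. induction n as [|n IH]; intros Hc Hp.
  - simpl. rewrite H0. lra.
  - rewrite tech5, S_INR.
    assert (sum_f_R0 (fun u => c u * x ^ u) n <= INR n * W * x)
      by (apply IH; intros; [apply Hc|apply Hp]; lia).
    assert (x ^ n <= 1) by (rewrite <- (pow1 n); apply pow_incr; lra).
    assert (0 <= x ^ n) by (apply pow_le; lra).
    assert (c (S n) <= W) by (apply Hc; lia).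
    assert (0 <= c (S n)) by (apply Hp; lia).
    simpl.
    assert (c (S n) * (x * x ^ n) <= W * x).
    { apply Rle_trans with (W * (x * x ^ n)).
      - apply Rmult_le_compat_r; [apply Rmult_le_pos|]; lra.
      - apply Rmult_le_compat_l; [lra|]. nra. }
    nra.
Qed.

Lemma unif_bound (X : Type) (E P : X -> Prop) (q : nat -> X -> X -> R) (sigma : nat) :
  (forall u, (1 <= u <= sigma)%nat ->
     exists W, 0 < W /\ forall e f, E e -> P f -> q u e f <= W) ->
  forall n, exists W, 0 < W /\ forall u e f, (1 <= u <= n)%nat -> (u <= sigma)%nat ->
     E e -> P f -> q u e f <= W.
Proof.
  intros H n. induction n as [|n [W [HW IH]]].
  - exists 1. split; [lra|]. intros; lia.
  - destruct (le_lt_dec (S n) sigma) as [Hs|Hs].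
    + destruct (H (S n)) as [W' [HW' H']]; [lia|].
      exists (Rmax W W'). split. { apply Rlt_le_trans with W; [lra|apply Rmax_l]. }
      intros u e f Hu Hus He Hf.
      destruct (Nat.eq_dec u (S n)) as [->|Hne].
      * apply Rle_trans with W'; [auto|apply Rmax_r].
      * apply Rle_trans with W; [apply IH; auto; lia|apply Rmax_l].
    + exists W. split; [lra|]. intros u e f Hu Hus He Hf. apply IH; auto; lia.
Qed.

Theorem proposition3p4 {X : Type} (E P : X -> Prop) (d : X -> X -> R) (F : X -> X)
  (pi : R) (sigma : nat) (q : nat -> X -> X -> R) :
  bipolar_metric_space E P d ->
  (forall e, E e -> E (F e)) ->
  (forall f, P f -> P (F f)) ->
  0 < pi < 1 ->
  (1 <= sigma)%nat ->
  (forall u e f, (u <= sigma)%nat -> E e -> P f -> 0 <= q u e f) ->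
  (forall e f, E e -> P f ->
     poly_sum q d sigma (F e) (F f) <= pi * poly_sum q d sigma e f) ->
  (forall e f, E e -> P f -> q 0%nat e f = 0) ->
  (forall u, (1 <= u <= sigma)%nat ->
     exists W, 0 < W /\ forall e f, E e -> P f -> q u e f <= W) ->
  (exists rho, (1 <= rho <= sigma)%nat /\
     exists Q, 0 < Q /\ forall e f, E e -> P f -> Q <= q rho e f) ->
  bp_continuous E P d F.
Proof.
  intros [_ [_ [Hd _]]] HFE HFP Hpi Hs Hq Hc H0 HW [rho [Hrho [Q [HQ HQb]]]].
  destruct (unif_bound X E P q sigma HW sigma) as [W [HW0 HWb]].
  assert (Hs0 : 0 < INR sigma) by (apply lt_0_INR; lia).
  assert (Key : forall eps, 0 < eps -> exists delta, 0 < delta /\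
     forall e f, E e -> P f -> d e f < delta -> d (F e) (F f) < eps).
  { intros eps Heps.
    assert (Hep : 0 < eps ^ rho) by (apply pow_lt; lra).
    set (delta := Rmin 1 (Q * eps ^ rho / (INR sigma * W))).
    assert (Hpos : 0 < Q * eps ^ rho / (INR sigma * W)).
    { apply Rdiv_lt_0_compat; apply Rmult_lt_0_compat; lra. }
    exists delta. split. { unfold delta. apply Rmin_glb_lt; lra. }
    intros e f He Hf Hlt.
    assert (Hd1 : d e f <= 1) by (apply Rlt_le, Rlt_le_trans with delta; [auto|apply Rmin_l]).
    assert (Hd2 : d e f < Q * eps ^ rho / (INR sigma * W))
      by (apply Rlt_le_trans with delta; [auto|apply Rmin_r]).
    assert (Hde : 0 <= d e f) by auto.
    assert (HFe := HFE e He). assert (HFf := HFP f Hf).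
    assert (Hdf : 0 <= d (F e) (F f)) by auto.
    assert (U : poly_sum q d sigma e f <= INR sigma * W * d e f).
    { unfold poly_sum. apply (sum_upper (fun u => q u e f)); auto.
      intros; apply HWb; auto; lia. }
    assert (L : Q * d (F e) (F f) ^ rho <= poly_sum q d sigma (F e) (F f)).
    { unfold poly_sum.
      apply Rle_trans with (q rho (F e) (F f) * d (F e) (F f) ^ rho).
      - apply Rmult_le_compat_r; [apply pow_le; auto|auto].
      - apply (sum_ge_term (fun u => q u (F e) (F f) * d (F e) (F f) ^ u)); [|lia].
        intros i Hi. apply Rmult_le_pos; [apply Hq; auto|apply pow_le; auto]. }
    assert (Hps : 0 <= poly_sum q d sigma e f).
    { unfold poly_sum. apply sum_nonneg. intros i Hi.
      apply Rmult_le_pos; [apply Hq; auto|apply pow_le; auto]. }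
    assert (M : INR sigma * W * d e f < Q * eps ^ rho).
    { assert (0 < INR sigma * W) by (apply Rmult_lt_0_compat; lra).
      assert (HH : INR sigma * W * d e f < INR sigma * W * (Q*eps^rho/(INR sigma*W))) by (apply Rmult_lt_compat_l; auto).
      replace (INR sigma * W * (Q * eps ^ rho / (INR sigma * W))) with (Q*eps^rho) in HH by (field; split; lra).
      auto. }
    assert (H1 := Hc e f He Hf).
    assert (Q * d (F e) (F f) ^ rho < Q * eps ^ rho) by nra.
    destruct (Rlt_or_le (d (F e) (F f)) eps) as [Hok|Hbad]; auto.
    assert (eps ^ rho <= d (F e) (F f) ^ rho) by (apply pow_incr; lra).
    nra. }
  split.
  - intros u v Hu Hv Hcv eps Heps.
    destruct (Key eps Heps) as [delta [Hdel Hk]].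
    destruct (Hcv delta Hdel) as [N HN]. exists N. intros n Hn.
    specialize (HN n Hn). unfold R_dist in *. rewrite Rminus_0_r in *.
    assert (0 <= d (u n) v) by auto.
    assert (0 <= d (F (u n)) (F v)) by auto.
    rewrite Rabs_right in HN by lra. rewrite Rabs_right by lra. auto.
  - intros u v Hu Hv Hcv eps Heps.
    destruct (Key eps Heps) as [delta [Hdel Hk]].
    destruct (Hcv delta Hdel) as [N HN]. exists N. intros n Hn.
    specialize (HN n Hn). unfold R_dist in *. rewrite Rminus_0_r in *.
    assert (0 <= d v (u n)) by auto.
    assert (0 <= d (F v) (F (u n))) by auto.
    rewrite Rabs_right in HN by lra. rewrite Rabs_right by lra. auto.
Qed.
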